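(* Let $Q_k$ be a $K$-subset system and $\mathbb N=(N,\sigma)$ the natural numbers with the Scott topology of the usual order. Then: (1) $\mathbb N$ is $1^d$-special and $1^{wf}$-special; (2) $\overline D(\mathbb N)=\overline{KF}(\mathbb N)$, and $D(\mathbb N)=K(\mathbb N)=KF(\mathbb N)$; (3) $\mathbb N$ is $1^k$-special.
   Context: $Q(X)$: nonempty compact saturated subsets; filtered family: nonempty, any two members contain a third. A $K$-subset system $Q_k$ assigns to each $T_0$ space $X$ a set $Q_k(X)$ with $\{\uparrow x\mid x\in X\}\subseteq Q_k(X)\subseteq Q(X)$ such that continuous images of $k$-Rudin sets are $k$-Rudin, where a nonempty $A\subseteq X$ is $k$-Rudin if for some filtered $\mathcal K\subseteq Q_k(X)$, $\overline A$ is a minimal closed set meeting every member of $\mathcal K$. $\overline{KF}(X)$ denotes the $k$-Rudin sets for the choice $Q_k(X)=Q(X)$ (Rudin sets), and $\overline D(X)=\{A\subseteq X\mid \overline A=\overline D$ for some directed $D\subseteq X\}$. $K(X)$: classes of $k$-Rudin sets under $A\sim B\iff\overline A=\overline B$, open sets $U^*=\{[A]\mid A\cap U\ne\emptyset\}$. $D(X)$ and $KF(X)$ are $K(X)$ for $Q_k(X)=\{\uparrow x\mid x\in X\}$ and $Q_k(X)=Q(X)$ respectively (the equalities in (2) identify a class with the common closure of its members). Iterates: $K_0(X)=X$, $K_{\beta+1}(X)=K(K_\beta(X))$, unions at limits; $\mathrm{rank}_k(X)$ least $\alpha$ with $K_\alpha(X)\cong K_{\alpha+1}(X)$; $X$ is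 $\alpha^k$-special if $\mathrm{rank}_k(X)=\alpha$ and $\alpha$ is least with $K_\alpha(X)$ having a greatest element. The notions $D_\beta,\mathrm{rank}_d,\alpha^d$-special and $KF_\beta,\mathrm{rank}_{wf},\alpha^{wf}$-special are the same with $D$, resp. $KF$, in place of $K$. *)

(* Defs.v *)
(* a lightweight, explicit notion of topological space
   (a type together with its family of open sets), since the paper's
   constructions K(X) build new spaces functorially from old ones. *)
From Stdlib Require Import List Arith.



Definition pset (T : Type) := T -> Prop.

Record topsp := TopSp { pt :> Type; opn : pset (pset pt) }.

Section Top.
Variable X : topsp.

Definition subset (A B : pset X) := forall x, A x -> B x.

Definition is_topology : Prop :=
  opn X (fun _ => True) /\ opn X (fun _ => False) /\
  (forall U V, opn X U -> opn X V -> opn X (fun x => U x /\ V x)) /\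
  (forall F : pset (pset X), (forall U, F U -> opn X U) ->
     opn X (fun x => exists U, F U /\ U x)).

Definition T0 : Prop :=
  forall x y : X, x <> y ->
    exists U, opn X U /\ ((U x /\ ~ U y) \/ (U y /\ ~ U x)).

Definition T0space : Prop := is_topology /\ T0.

Definition closed (C : pset X) : Prop := opn X (fun x => ~ C x).

Definition closure (A : pset X) : pset X :=
  fun x => forall C, closed C -> subset A C -> C x.

Definition spec_le (x y : X) : Prop := closure (fun z => z = y) x.

Definition upset (A : pset X) : pset X :=
  fun y => exists x, A x /\ spec_le x y.

Definition saturated (A : pset X) : Prop :=
  forall x y, A x -> spec_le x y -> A y.

Definition compact (A : pset X) : Prop :=
  forall F : pset (pset X), (forall U, F U -> opn X U) ->
    subset A (fun x => exists U, F U /\ U x) ->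
    exists s : list (pset X), (forall U, In U s -> F U) /\
      subset A (fun x => exists U, In U s /\ U x).

Definition Qset : pset (pset X) :=
  fun K => (exists x, K x) /\ compact K /\ saturated K.

Definition filtered (KK : pset (pset X)) : Prop :=
  (exists K, KK K) /\
  forall K1 K2, KK K1 -> KK K2 ->
    exists K3, KK K3 /\ subset K3 K1 /\ subset K3 K2.

Definition meets (A B : pset X) : Prop := exists x, A x /\ B x.

Definition min_closed_meeting (KK : pset (pset X)) (C : pset X) : Prop :=
  closed C /\ (forall K, KK K -> meets C K) /\
  forall C', closed C' -> subset C' C -> (forall K, KK K -> meets C' K) ->
    subset C C'.

Definition kRudin (QX : pset (pset X)) (A : pset X) : Prop :=
  (exists x, A x) /\
  exists KK : pset (pset X), filtered KK /\ (forall K, KK K -> QX K) /\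
    min_closed_meeting KK (closure A).

Definition directed (D : pset X) : Prop :=
  (exists x, D x) /\
  forall x y, D x -> D y -> exists z, D z /\ spec_le x z /\ spec_le y z.

Definition Dbar : pset (pset X) :=
  fun A => exists D, directed D /\ forall x, closure A x <-> closure D x.

Definition has_greatest : Prop := exists g : X, forall x : X, spec_le x g.

End Top.

Arguments subset {X}.
Arguments closed {X}.
Arguments closure {X}.
Arguments spec_le {X}.
Arguments upset {X}.
Arguments saturated {X}.
Arguments compact {X}.
Arguments Qset {X}.
Arguments filtered {X}.
Arguments meets {X}.
Arguments min_closed_meeting {X}.
Arguments kRudin {X}.
Arguments directed {X}.
Arguments Dbar {X}.

Definition continuous {X Y : topsp} (f : X -> Y) : Prop :=
  forall V, opn Y V -> opn X (fun x => V (f x)).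

Definition homeomorphic (X Y : topsp) : Prop :=
  exists (f : X -> Y) (g : Y -> X),
    (forall x, g (f x) = x) /\ (forall y, f (g y) = y) /\
    continuous f /\ continuous g.

Definition image {X Y : Type} (f : X -> Y) (A : pset X) : pset Y :=
  fun y => exists x, A x /\ f x = y.

Definition subset_choice := forall X : topsp, pset (pset X).

Definition K_subset_system (Qk : subset_choice) : Prop :=
  (forall X : topsp, T0space X ->
     (forall x : X, Qk X (@upset X (fun z => z = x))) /\
     (forall K, Qk X K -> Qset K)) /\
  (forall (X Y : topsp) (f : X -> Y), T0space X -> T0space Y ->
     continuous f ->
     forall A, kRudin (Qk X) A -> kRudin (Qk Y) (image f A)).

Definition Qd : subset_choice :=
  fun X K => exists x : X, K = @upset X (fun z => z = x).
Definition Qwf : subset_choice := fun X => @Qset X.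

(* points of K(X): classes of k-Rudin sets, identified with their common
   closure *)
Definition Kpts (Qk : subset_choice) (X : topsp) : pset (pset X) :=
  fun C => exists A, kRudin (Qk X) A /\ C = closure A.

Definition Kspace (Qk : subset_choice) (X : topsp) : topsp :=
  @TopSp {C : pset X | Kpts Qk X C}
    (fun W => exists U, opn X U /\
       W = (fun c => exists x, proj1_sig c x /\ U x)).

Fixpoint Kiter (Qk : subset_choice) (n : nat) (X : topsp) : topsp :=
  match n with
  | 0 => X
  | S m => Kspace Qk (Kiter Qk m X)
  end.

(* X is 1^k-special: rank_k(X) = 1 (K_0 not ~= K_1, K_1 ~= K_2) and 1 is
   least with K_1(X) having a greatest element. *)
Definition one_special (Qk : subset_choice) (X : topsp) : Prop :=
  ~ homeomorphic (Kiter Qk 0 X) (Kiter Qk 1 X) /\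
  homeomorphic (Kiter Qk 1 X) (Kiter Qk 2 X) /\
  ~ has_greatest (Kiter Qk 0 X) /\ has_greatest (Kiter Qk 1 X).

Definition nat_directed (D : nat -> Prop) : Prop :=
  (exists n, D n) /\
  forall m n, D m -> D n -> exists k, D k /\ m <= k /\ n <= k.

Definition nat_is_sup (D : nat -> Prop) (s : nat) : Prop :=
  (forall d, D d -> d <= s) /\
  (forall t, (forall d, D d -> d <= t) -> s <= t).

Definition scott_open_nat (U : nat -> Prop) : Prop :=
  (forall m n, U m -> m <= n -> U n) /\
  (forall D s, nat_directed D -> nat_is_sup D s -> U s ->
     exists d, D d /\ U d).

Definition Nscott : topsp := @TopSp nat scott_open_nat.

(* Main.v *)
Require Import Defs.
From Stdlib Require Import Classical FunctionalExtensionality PropExtensionality ProofIrrelevance ClassicalEpsilon Arith Lia List.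

Lemma pext {T : Type} (P Q : T -> Prop) : (forall x, P x <-> Q x) -> P = Q.
Proof. intros H; apply functional_extensionality; intro x; apply propositional_extensionality; auto. Qed.

Lemma closed_compl (X : topsp) (U : pset X) : opn X U -> closed (fun x => ~ U x).
Proof.
  intros H. unfold closed.
  rewrite (pext (fun x => ~ ~ U x) U); auto.
  intro; split; [apply NNPP|tauto].
Qed.

Lemma sub_closure (X : topsp) (A : pset X) : subset A (closure A).
Proof. intros x Hx C _ HC; auto. Qed.

Lemma closure_min (X : topsp) (A C : pset X) : closed C -> subset A C -> subset (closure A) C.
Proof. intros HC HAC x Hx; apply Hx; auto. Qed.

Lemma closure_closed (X : topsp) (A : pset X) : is_topology X -> closed (closure A).
Proof.
  intros [_ [_ [_ Hu]]]. unfold closed.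
  set (F := fun U : pset X => exists C, closed C /\ subset A C /\ U = (fun x => ~ C x)).
  rewrite (pext (fun x => ~ closure A x) (fun x => exists U, F U /\ U x)).
  - apply Hu. intros U [C [HC [_ ->]]]; exact HC.
  - intro x; split.
    + intro Hn. apply NNPP; intro Hn2; apply Hn. intros C HC HAC.
      apply NNPP; intro HCx; apply Hn2. exists (fun x => ~ C x); split; auto.
      exists C; auto.
    + intros [U [[C [HC [HAC ->]]] HU]] Hcl. apply HU, Hcl; auto.
Qed.

Lemma spec_refl (X : topsp) (x : X) : spec_le x x.
Proof. intros C _ H; apply H; reflexivity. Qed.

Lemma spec_trans (X : topsp) (x y z : X) : spec_le x y -> spec_le y z -> spec_le x z.
Proof.
  intros H1 H2 C HC Hs. apply H1; auto. intros w ->. apply H2; auto.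
Qed.

Lemma open_up (X : topsp) (U : pset X) (x y : X) : opn X U -> U x -> spec_le x y -> U y.
Proof.
  intros HU Ux Hxy. apply NNPP; intro Hy.
  apply (Hxy (fun z => ~ U z) (closed_compl X U HU)); auto.
  intros z ->; exact Hy.
Qed.

Lemma closed_down (X : topsp) (C : pset X) (x y : X) : closed C -> C y -> spec_le x y -> C x.
Proof. intros HC Cy H; apply H; auto. intros z ->; auto. Qed.

Lemma closure_meets_open (X : topsp) (A U : pset X) (x : X) :
  opn X U -> closure A x -> U x -> exists a, A a /\ U a.
Proof.
  intros HU Hx Ux. apply NNPP; intro Hn.
  apply (Hx (fun z => ~ U z) (closed_compl X U HU)); auto.
  intros a Ha Ua; apply Hn; eauto.
Qed.

Lemma closure_nonempty (X : topsp) (A : pset X) (x : X) : is_topology X -> closure A x -> exists a, A a.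
Proof.
  intros [HT _] Hx. apply NNPP; intro Hn.
  apply (Hx (fun _ => False)).
  - unfold closed. rewrite (pext (fun _ : X => ~ False) (fun _ => True)); auto.
    intros; tauto.
  - intros a Ha; apply Hn; eauto.
Qed.

Definition total (X : topsp) := forall x y : X, spec_le x y \/ spec_le y x.

Lemma rudin_directed (X : topsp) (Q : pset (pset X)) (A : pset X) :
  is_topology X -> (forall x : X, Q (upset (fun z => z = x))) -> (exists x, A x) ->
  (forall a1 a2, A a1 -> A a2 -> exists a3, A a3 /\ spec_le a1 a3 /\ spec_le a2 a3) ->
  kRudin Q A.
Proof.
  intros Htop HQ Hne Hdir. split; auto.
  exists (fun K => exists a, A a /\ K = upset (fun z => z = a)).
  split; [|split].
  - split.
    + destruct Hne as [a Ha]; eauto.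
    + intros K1 K2 [a1 [H1 ->]] [a2 [H2 ->]].
      destruct (Hdir a1 a2 H1 H2) as [a3 [H3 [L1 L2]]].
      exists (upset (fun z => z = a3)); split; eauto.
      split; intros y [z [-> Hz]].
      * exists a1; split; [reflexivity| eapply spec_trans; eauto].
      * exists a2; split; [reflexivity| eapply spec_trans; eauto].
  - intros K [a [_ ->]]; auto.
  - split; [apply closure_closed; auto| split].
    + intros K [a [Ha ->]]. exists a; split; [apply sub_closure; auto|].
      exists a; split; auto; apply spec_refl.
    + intros C' HC' _ Hm. apply closure_min; auto.
      intros a Ha. destruct (Hm _ (ex_intro _ a (conj Ha eq_refl))) as [y [Cy [z [-> Hz]]]].
      eapply closed_down; eauto.
Qed.

Lemma rudin_nonempty (X : topsp) (Q : pset (pset X)) (A : pset X) :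
  is_topology X -> total X -> (forall x : X, Q (upset (fun z => z = x))) -> (exists x, A x) ->
  kRudin Q A.
Proof.
  intros Ht Htot HQ Hne. apply rudin_directed; auto.
  intros a1 a2 H1 H2. destruct (Htot a1 a2).
  - exists a2; split; auto; split; auto; apply spec_refl.
  - exists a1; split; auto; split; auto; apply spec_refl.
Qed.

Lemma upset_Qset (X : topsp) (x : X) : Qset (upset (fun z => z = x)).
Proof.
  split; [|split].
  - exists x, x; split; auto; apply spec_refl.
  - intros F HF Hcov. destruct (Hcov x (ex_intro _ x (conj eq_refl (spec_refl X x)))) as [U [FU Ux]].
    exists (U :: nil); split.
    + intros V [<-|[]]; auto.
    + intros y [z [-> Hz]]. exists U; split; [left; auto|]. eapply open_up; eauto.
  - intros y w [z [Hz1 Hz]] H. exists z; split; auto. eapply spec_trans; eauto.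
Qed.

Lemma Kpt_nonempty (Q : subset_choice) (X : topsp) (C : pset X) : Kpts Q X C -> exists x, C x.
Proof. intros [A [[[a Ha] _] ->]]. exists a; apply sub_closure; auto. Qed.

Lemma Kpt_closed (Q : subset_choice) (X : topsp) (C : pset X) : is_topology X -> Kpts Q X C -> closed C.
Proof. intros Ht [A [_ ->]]; apply closure_closed; auto. Qed.

Lemma sig_ext (X : topsp) (P : pset X -> Prop) (c d : {C : pset X | P C}) :
  (forall x, proj1_sig c x <-> proj1_sig d x) -> c = d.
Proof.
  destruct c as [c pc], d as [d pd]; simpl; intros H.
  assert (c = d) by (apply pext; auto). subst d. f_equal; apply proof_irrelevance.
Qed.

Lemma star_spec (Q : subset_choice) (X : topsp) (c d : Kspace Q X) :
  subset (proj1_sig c) (proj1_sig d) -> spec_le c d.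
Proof.
  intros Hs W HW HdW. apply NNPP; intro Hn.
  destruct HW as [U [HU Heq]].
  pose proof (f_equal (fun f => f c) Heq) as Ec; simpl in Ec.
  pose proof (f_equal (fun f => f d) Heq) as Ed; simpl in Ed.
  assert (H1 : exists x, proj1_sig c x /\ U x) by (rewrite <- Ec; exact Hn).
  destruct H1 as [x [cx Ux]].
  assert (H2 : ~ W d) by (rewrite Ed; exists x; split; auto).
  apply H2, HdW; reflexivity.
Qed.

Lemma K_topology (Q : subset_choice) (X : topsp) : is_topology X -> total X -> is_topology (Kspace Q X).
Proof.
  intros Ht Htot. pose proof Ht as [HT [HF [HI HU]]].
  split; [|split; [|split]].
  - exists (fun _ => True); split; auto. apply pext; intro c; split; auto.
    intros _. destruct (Kpt_nonempty Q X _ (proj2_sig c)) as [x Hx]; eauto.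
  - exists (fun _ => False); split; auto. apply pext; intro c; split; [tauto|].
    intros [x [_ []]].
  - intros W1 W2 [U [HU1 ->]] [V [HV1 ->]].
    exists (fun x => U x /\ V x); split; auto.
    apply pext; intro c; split.
    + intros [[x [cx Ux]] [y [cy Vy]]]. destruct (Htot x y) as [L|L].
      * exists y; repeat split; auto. eapply open_up; eauto.
      * exists x; repeat split; auto. eapply open_up; eauto.
    + intros [x [cx [Ux Vx]]]; split; eauto.
  - intros F HFo.
    exists (fun x => exists U, (opn X U /\ F (fun c : Kspace Q X => exists x, proj1_sig c x /\ U x)) /\ U x).
    split.
    + apply HU. intros U [H _]; auto.
    + apply pext; intro c; split.
      * intros [W [FW Wc]]. destruct (HFo W FW) as [U [HUo ->]].
        destruct Wc as [x [cx Ux]]. exists x; split; auto. exists U; auto.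
      * intros [x [cx [U [[HUo FU] Ux]]]]. eexists; split; [exact FU|]. exists x; split; auto.
Qed.

Lemma K_T0 (Q : subset_choice) (X : topsp) : is_topology X -> T0 (Kspace Q X).
Proof.
  intros Ht c d Hne.
  assert (Hx : exists x, ~ (proj1_sig c x <-> proj1_sig d x)).
  { apply NNPP; intro Hn; apply Hne, sig_ext. intro x; apply NNPP; intro H; apply Hn; eauto. }
  destruct Hx as [x Hx].
  pose proof (Kpt_closed Q X _ Ht (proj2_sig c)) as Cc.
  pose proof (Kpt_closed Q X _ Ht (proj2_sig d)) as Cd.
  destruct (classic (proj1_sig c x)) as [cx|ncx].
  - assert (ndx : ~ proj1_sig d x) by tauto.
    exists (fun e : Kspace Q X => exists y, proj1_sig e y /\ ~ proj1_sig d y).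
    split; [exists (fun y => ~ proj1_sig d y); split; auto|].
    left; split; eauto. intros [y [dy ny]]; auto.
  - assert (dx : proj1_sig d x) by tauto.
    exists (fun e : Kspace Q X => exists y, proj1_sig e y /\ ~ proj1_sig c y).
    split; [exists (fun y => ~ proj1_sig c y); split; auto|].
    right; split; eauto. intros [y [dy ny]]; auto.
Qed.

Lemma cl_inj (Y : topsp) (x y : Y) : T0 Y ->
  closure (fun z => z = x) = closure (fun z => z = y) -> x = y.
Proof.
  intros HT0 E. apply NNPP; intro Hne.
  destruct (HT0 x y Hne) as [U [HU [[Ux nUy]|[Uy nUx]]]].
  - apply nUy. eapply open_up; eauto. change (closure (fun z => z = y) x).
    rewrite <- E. apply spec_refl.
  - apply nUx. eapply open_up; eauto. change (closure (fun z => z = x) y).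
    rewrite E. apply spec_refl.
Qed.

Lemma sober_iso (Q : subset_choice) (Y : topsp) : is_topology Y -> T0 Y ->
  (forall x : Y, Q Y (upset (fun z => z = x))) ->
  (forall C, Kpts Q Y C -> exists y, C = closure (fun z => z = y)) ->
  homeomorphic Y (Kspace Q Y).
Proof.
  intros Ht HT0 HQ Hsob.
  assert (Kp : forall y : Y, Kpts Q Y (closure (fun z => z = y))).
  { intro y. exists (fun z => z = y); split; auto.
    apply rudin_directed; eauto.
    intros a1 a2 -> ->. exists y; repeat split; auto; apply spec_refl. }
  assert (key : forall (U : pset Y) y, opn Y U -> ((exists x, closure (fun z => z = y) x /\ U x) <-> U y)).
  { intros U y HU; split.
    - intros [x [Hx Ux]]. eapply open_up; eauto.
    - intros Uy; exists y; split; auto; apply spec_refl. }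
  set (f := fun y : Y => (exist _ (closure (fun z => z = y)) (Kp y) : Kspace Q Y)).
  set (g := fun c : Kspace Q Y => proj1_sig (constructive_indefinite_description _ (Hsob _ (proj2_sig c)))).
  assert (gspec : forall c, proj1_sig c = closure (fun z => z = g c)).
  { intro c. unfold g. destruct constructive_indefinite_description; simpl; auto. }
  exists f, g. split; [|split; [|split]].
  - intro y. apply cl_inj; auto. symmetry. exact (gspec (f y)).
  - intro c. apply sig_ext. intro x. simpl. rewrite (gspec c). tauto.
  - intros V [U [HU ->]]. simpl.
    rewrite (pext _ U); [exact HU|]. intro y; apply key; auto.
  - intros U HU. exists U; split; auto.
    apply pext; intro c. rewrite (gspec c). symmetry; apply key; auto.
Qed.

Lemma K1_sober (Q : subset_choice) (X : topsp) : is_topology X -> total X ->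
  (forall x : X, Q X (upset (fun z => z = x))) ->
  forall C, Kpts Q (Kspace Q X) C -> exists y, C = closure (fun z => z = y).
Proof.
  intros Ht Htot HQ C [A [HA ->]].
  destruct HA as [[a0 Ha0] _].
  set (U := fun x : X => exists c, A c /\ proj1_sig c x).
  assert (pc0 : Kpts Q X (closure U)).
  { exists U; split; auto. apply rudin_nonempty; auto.
    destruct (Kpt_nonempty Q X _ (proj2_sig a0)) as [x Hx]. exists x, a0; auto. }
  set (y := (exist _ (closure U) pc0 : Kspace Q X)).
  exists y. apply pext; intro e; split.
  - apply closure_min.
    + apply closure_closed, K_topology; auto.
    + intros a Ha. apply star_spec. simpl. intros x Hx. apply sub_closure. exists a; auto.
  - intros He W HW HAW. apply He; auto. intros z ->.
    apply NNPP; intro Hn. destruct HW as [V [HV Heq]].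
    pose proof (f_equal (fun f => f y) Heq) as Ey; simpl in Ey.
    assert (H1 : exists x, closure U x /\ V x) by (rewrite <- Ey; exact Hn).
    destruct H1 as [x [Hx Vx]].
    destruct (closure_meets_open X U V x HV Hx Vx) as [u [[c [Ac cu]] Vu]].
    pose proof (f_equal (fun f => f c) Heq) as Ec; simpl in Ec.
    assert (H2 : ~ W c) by (rewrite Ec; exists u; split; auto).
    auto.
Qed.

Lemma K_greatest (Q : subset_choice) (X : topsp) : is_topology X -> total X ->
  (forall x : X, Q X (upset (fun z => z = x))) -> (exists x : X, True) ->
  has_greatest (Kspace Q X).
Proof.
  intros Ht Htot HQ [x0 _].
  assert (p : Kpts Q X (closure (fun _ => True))).
  { exists (fun _ => True); split; auto. apply rudin_nonempty; eauto. }
  exists (exist _ _ p). intro c. apply star_spec. simpl. intros x _ C _ H; apply H; auto.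
Qed.

Lemma cont_mono (X Y : topsp) (f : X -> Y) (x y : X) : continuous f -> spec_le x y -> spec_le (f x) (f y).
Proof.
  intros Hf H C HC Hs. apply (H (fun z => C (f z))).
  - exact (Hf _ HC).
  - intros z ->; apply Hs; auto.
Qed.

Lemma not_homeo (X Y : topsp) : has_greatest Y -> ~ has_greatest X -> ~ homeomorphic X Y.
Proof.
  intros [t Ht] Hn [f [g [gf [fg [cf cg]]]]]. apply Hn. exists (g t).
  intro x. rewrite <- (gf x). apply cont_mono; auto.
Qed.

Lemma N_le_spec (m n : nat) : m <= n -> @spec_le Nscott m n.
Proof.
  intros Hle C HC Hs. apply NNPP; intro Hn.
  destruct HC as [Hup _]. apply (Hup m n Hn Hle). apply Hs; reflexivity.
Qed.

Lemma N_spec_le (m n : nat) : @spec_le Nscott m n -> m <= n.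
Proof.
  intros H. apply (H (fun k => k <= n)).
  - split.
    + intros a b Ha Hab; lia.
    + intros D s HD [Hub Hlub] Hs. apply NNPP; intro Hn.
      assert (s <= n); [|lia].
      apply Hlub. intros d Dd. apply NNPP; intro Hd; apply Hn; eauto.
  - intros z ->; lia.
Qed.

Lemma N_total : total Nscott.
Proof. intros x y. destruct (le_lt_dec x y); [left|right]; apply N_le_spec; lia. Qed.

Lemma N_not_greatest : ~ has_greatest Nscott.
Proof. intros [g Hg]. pose proof (N_spec_le _ _ (Hg (S g))); lia. Qed.

Lemma N_up_open (k : nat) : opn Nscott (fun n => k <= n).
Proof.
  split.
  - intros a b Ha Hab; lia.
  - intros D s [[d0 Hd0] _] [Hub Hlub] Hs. destruct k as [|k].
    + exists d0; split; auto; lia.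
    + apply NNPP; intro Hn.
      assert (s <= k); [|lia].
      apply Hlub. intros d Dd. apply NNPP; intro Hd; apply Hn. exists d; split; auto; lia.
Qed.

Lemma N_topology : is_topology Nscott.
Proof.
  split; [|split; [|split]].
  - split; auto. intros D s [[d Hd] _] _ _; eauto.
  - split; [tauto|]. intros D s _ _ [].
  - intros U V [HU1 HU2] [HV1 HV2]. split.
    + intros a b [Ua Va] Hab; split; eauto.
    + intros D s HD Hsup [Us Vs].
      destruct (HU2 D s HD Hsup Us) as [d1 [D1 U1]].
      destruct (HV2 D s HD Hsup Vs) as [d2 [D2 V2]].
      destruct (proj2 HD d1 d2 D1 D2) as [k [Dk [L1 L2]]].
      exists k; split; auto; split; eauto.
  - intros F HF. split.
    + intros a b [U [FU Ua]] Hab. exists U; split; auto. apply (proj1 (HF U FU) a b); auto.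
    + intros D s HD Hsup [U [FU Us]].
      destruct (proj2 (HF U FU) D s HD Hsup Us) as [d [Dd Ud]]. eauto.
Qed.

Lemma N_T0space : T0space Nscott.
Proof.
  split; [apply N_topology|]. intros x y Hne.
  destruct (Nat.lt_total x y) as [L|[E|L]]; [|contradiction|].
  - exists (fun n => y <= n); split; [apply N_up_open|]. right; split; simpl; lia.
  - exists (fun n => x <= n); split; [apply N_up_open|]. left; split; simpl; lia.
Qed.

Lemma one_sp (Q : subset_choice) :
  (forall x : Nscott, Q Nscott (upset (fun z => z = x))) ->
  (forall y : Kspace Q Nscott, Q (Kspace Q Nscott) (upset (fun z => z = y))) ->
  one_special Q Nscott.
Proof.
  intros H0 H1.
  assert (G : has_greatest (Kspace Q Nscott)).
  { apply K_greatest; auto using N_topology, N_total. exists 0; auto. }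
  split; [|split; [|split]]; simpl.
  - apply not_homeo; auto using N_not_greatest.
  - apply sober_iso; auto.
    + apply K_topology; auto using N_topology, N_total.
    + apply K_T0, N_topology.
    + apply K1_sober; auto using N_topology, N_total.
  - exact N_not_greatest.
  - exact G.
Qed.

Lemma rudin_char (Q : pset (pset Nscott)) :
  (forall x : Nscott, Q (upset (fun z => z = x))) ->
  forall A, kRudin Q A <-> exists a, A a.
Proof.
  intros HQ A; split.
  - intros [H _]; auto.
  - intros H; apply rudin_nonempty; auto using N_topology, N_total.
Qed.

Lemma Kpts_char (Q : subset_choice) :
  (forall x : Nscott, Q Nscott (upset (fun z => z = x))) ->
  forall C, Kpts Q Nscott C <-> exists A, (exists a : Nscott, A a) /\ C = closure A.
Proof.
  intros HQ C; split; intros [A [HA E]]; exists A; split; try exact E.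
  - exact (proj1 (rudin_char _ HQ A) HA).
  - exact (proj2 (rudin_char _ HQ A) HA).
Qed.

Theorem mainTheorem10 (Qk : subset_choice) (HQk : K_subset_system Qk) :
  (one_special Qd Nscott /\ one_special Qwf Nscott) /\
  ((forall A : pset Nscott, Dbar A <-> kRudin (Qwf Nscott) A) /\
   (forall C : pset Nscott, Kpts Qd Nscott C <-> Kpts Qk Nscott C) /\
   (forall C : pset Nscott, Kpts Qk Nscott C <-> Kpts Qwf Nscott C)) /\
  one_special Qk Nscott.
Proof.
  assert (Hd : forall (X : topsp) (x : X), Qd X (upset (fun z => z = x))).
  { intros X x; exists x; reflexivity. }
  assert (Hw : forall (X : topsp) (x : X), Qwf X (upset (fun z => z = x))).
  { intros X x; apply upset_Qset. }
  assert (Hk0 : forall x : Nscott, Qk Nscott (upset (fun z => z = x))).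
  { apply (proj1 (proj1 HQk Nscott N_T0space)). }
  assert (Hk1 : forall y : Kspace Qk Nscott, Qk (Kspace Qk Nscott) (upset (fun z => z = y))).
  { apply (proj1 (proj1 HQk (Kspace Qk Nscott)
      (conj (K_topology Qk Nscott N_topology N_total) (K_T0 Qk Nscott N_topology)))). }
  split; [split; apply one_sp; auto|split; [split; [|split]|apply one_sp; auto]].
  - intros A. rewrite (rudin_char _ (Hw Nscott)). split.
    + intros [D [[[d Hd0] _] Hcl]].
      apply (closure_nonempty Nscott A d N_topology). apply Hcl. apply sub_closure; auto.
    + intros Hne. exists A; split; [|tauto]. split; auto.
      intros x y Hx Hy. destruct (N_total x y).
      * exists y; repeat split; auto; apply spec_refl.
      * exists x; repeat split; auto; apply spec_refl.
  - intros C. rewrite (Kpts_char _ (Hd Nscott)), (Kpts_char _ Hk0); tauto.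
  - intros C. rewrite (Kpts_char _ (Hw Nscott)), (Kpts_char _ Hk0); tauto.
Qed.
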